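(* Let $0<\alpha<1$, $\sigma>0$, $T>0$, $h=\sigma^2\alpha^2$, $\eta=\frac{4\pi^2\alpha}{\sigma^2\alpha^2}=\frac{4\pi^2}{\sigma^2\alpha}$, let $\gamma>0$, and for $x\in[e^{\frac1\alpha(\gamma-T)},1]$ let $a=2\alpha\pi(T+\alpha\log x)$ and $Q(x)=\frac{x^\alpha}{e^{2\pi a/h}-1}$. Then uniformly for $x\in[e^{\frac1\alpha(\gamma-T)},1]$: if $\eta\ge1$ (i.e. $h\le4\pi^2\alpha$), then $$\frac{1}{e^{\eta T}-1}\le Q(x)\le\frac{e^{\gamma}e^{-T}}{e^{\eta\gamma}-1};$$ if $\eta<1$ (i.e. $h>4\pi^2\alpha$), then $$\frac{(1-\eta)^{1-\frac1\eta}e^{-T}}{\eta}\le Q(x)\le\max\left\{\frac{1}{e^{\eta T}-1},\frac{e^\gamma e^{-T}}{e^{\eta\gamma}-1}\right\}.$$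
   Context: In the paper $\gamma=\alpha\log\!\Big(\frac{\frac1\kappa\sqrt{u^*}+1}{\sqrt{u^*}-1}\Big)+\sqrt{u^*}$ with $\kappa=\frac{\alpha}{1-\alpha}$ and $u^*=\frac{1+(1-2\alpha)\sqrt{4\alpha-4\alpha^2+1}}{2(1-\alpha)^2}$, and it is used with $\gamma<T$ so the interval is nonempty. *)

(* Defs.v *)
From Stdlib Require Import Reals.
Open Scope R_scope.

Definition hpar (sigma alpha : R) : R := sigma ^ 2 * alpha ^ 2.
Definition etapar (sigma alpha : R) : R := 4 * PI ^ 2 * alpha / (sigma ^ 2 * alpha ^ 2).
Definition apar (alpha T x : R) : R := 2 * alpha * PI * (T + alpha * ln x).
Definition Qfun (alpha sigma T x : R) : R :=
  Rpower x alpha / (exp (2 * PI * apar alpha T x / hpar sigma alpha) - 1).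

(* Main.v *)
Require Import Defs.
From Stdlib Require Import Reals.
From Coquelicot Require Import Coquelicot.
From Stdlib Require Import Lra.
Open Scope R_scope.

Definition phi (e t : R) : R := exp (-(1-e)*t) - exp (-t).
Definition dphi (e t : R) : R := -(1-e)*exp(-(1-e)*t) + exp(-t).

Lemma phi_der (e : R) : forall t, is_derive (phi e) t (dphi e t).
Proof. intros t. unfold phi, dphi. auto_derive. auto. ring. Qed.

Lemma mono_le (e a b : R) : a <= b -> (forall t, a <= t <= b -> 0 <= dphi e t) ->
  phi e a <= phi e b.
Proof.
  intros Hab Hd. destruct (Req_dec a b) as [->|Hne]; [lra|].
  destruct (MVT_cor2 (phi e) (dphi e) a b) as [c [Hc Hc2]]; [lra| |].
  - intros c _. apply is_derive_Reals, phi_der.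
  - assert (0 <= dphi e c) by (apply Hd; lra). nra.
Qed.

Lemma mono_ge (e a b : R) : a <= b -> (forall t, a <= t <= b -> dphi e t <= 0) ->
  phi e b <= phi e a.
Proof.
  intros Hab Hd. destruct (Req_dec a b) as [->|Hne]; [lra|].
  destruct (MVT_cor2 (phi e) (dphi e) a b) as [c [Hc Hc2]]; [lra| |].
  - intros c _. apply is_derive_Reals, phi_der.
  - assert (dphi e c <= 0) by (apply Hd; lra). nra.
Qed.

Lemma phi_fact (e t : R) : phi e t = exp (-t) * (exp (e*t) - 1).
Proof.
  unfold phi. replace (-(1-e)*t) with (-t + e*t) by ring. rewrite exp_plus. ring.
Qed.

Lemma phi_pos (e t : R) : 0 < e -> 0 < t -> 0 < phi e t.
Proof.
  intros He Ht. rewrite phi_fact. apply Rmult_lt_0_compat. apply exp_pos.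
  assert (1 < exp (e*t)). { rewrite <- exp_0. apply exp_increasing. nra. } lra.
Qed.

Lemma key (e T s : R) : 0 < e -> 0 < s ->
  exp (s - T) / (exp (e*s) - 1) = exp (-T) / phi e s.
Proof.
  intros He Hs. rewrite phi_fact.
  assert (1 < exp (e*s)). { rewrite <- exp_0. apply exp_increasing. nra. }
  replace (s - T) with (s + -T) by ring. rewrite exp_plus.
  assert (exp s * exp (-s) = 1). { rewrite <- exp_plus. replace (s + -s) with 0 by ring. apply exp_0. }
  assert (0 < exp s) by apply exp_pos. rewrite (exp_Ropp s).
  field. split; lra.
Qed.

Lemma dphi_sign (e t : R) : dphi e t = exp (-(1-e)*t) * (exp (-(e*t)) - (1-e)).
Proof.
  unfold dphi. rewrite Rmult_minus_distr_l, <- exp_plus.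
  replace (-(1-e)*t + -(e*t)) with (-t) by ring. ring.
Qed.

Lemma expmono (x y : R) : x <= y -> exp x <= exp y.
Proof. intros [H|H]; [left; apply exp_increasing; auto|rewrite H; lra]. Qed.

Lemma cmp_inv (c p1 p2 : R) : 0 < c -> 0 < p1 -> p1 <= p2 -> c / p2 <= c / p1.
Proof.
  intros. unfold Rdiv. apply Rmult_le_compat_l; [lra|]. apply Rinv_le_contravar; lra.
Qed.

Theorem lemma4p1 (alpha sigma T gamma : R) :
  0 < alpha < 1 -> 0 < sigma -> 0 < T -> 0 < gamma ->
  let eta := etapar sigma alpha in
  (1 <= eta ->
     forall x, exp ((gamma - T) / alpha) <= x <= 1 ->
       1 / (exp (eta * T) - 1) <= Qfun alpha sigma T x <=
       exp gamma * exp (- T) / (exp (eta * gamma) - 1)) /\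
  (eta < 1 ->
     forall x, exp ((gamma - T) / alpha) <= x <= 1 ->
       Rpower (1 - eta) (1 - 1 / eta) * exp (- T) / eta <= Qfun alpha sigma T x <=
       Rmax (1 / (exp (eta * T) - 1)) (exp gamma * exp (- T) / (exp (eta * gamma) - 1))).
Proof.
  intros Ha Hs HT Hg eta.
  assert (Heta : 0 < eta).
  { unfold eta, etapar. assert (0 < PI) by apply PI_RGT_0.
    apply Rdiv_lt_0_compat. { apply Rmult_lt_0_compat; [|lra]. apply Rmult_lt_0_compat; [lra|]. apply pow_lt; lra. } apply Rmult_lt_0_compat; apply pow_lt; lra. }
  assert (HQ : forall x, exp ((gamma - T) / alpha) <= x <= 1 ->
     let s := T + alpha * ln x in gamma <= s <= T /\ Qfun alpha sigma T x = exp (-T) / phi eta s).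
  { intros x Hx s.
    assert (Hx0 : 0 < x) by (pose proof (exp_pos ((gamma - T) / alpha)); lra).
    assert (Hl1 : ln x <= 0).
    { destruct (Req_dec x 1) as [->|]. rewrite ln_1; lra.
      left. rewrite <- ln_1. apply ln_increasing; lra. }
    assert (Hl2 : (gamma - T) / alpha <= ln x).
    { rewrite <- (ln_exp ((gamma - T) / alpha)). apply ln_le; [apply exp_pos|lra]. }
    assert (Hs1 : gamma <= s).
    { unfold s. apply (Rmult_le_compat_l alpha) in Hl2; [|lra].
      replace (alpha * ((gamma - T) / alpha)) with (gamma - T) in Hl2 by (field; lra). lra. }
    split. split; [lra|]. unfold s. nra.
    unfold Qfun. rewrite <- (key eta T s); [|lra|lra].
    unfold Rpower. f_equal. f_equal. unfold s. ring_simplify. reflexivity.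
    f_equal. f_equal. unfold apar, hpar, eta, etapar, s. field. lra. }
  assert (HT' : 1 / (exp (eta * T) - 1) = exp (-T) / phi eta T).
  { rewrite <- key; [|lra|lra]. replace (T - T) with 0 by ring. rewrite exp_0. reflexivity. }
  assert (Hg' : exp gamma * exp (- T) / (exp (eta * gamma) - 1) = exp (-T) / phi eta gamma).
  { rewrite <- key; [|lra|lra]. rewrite <- exp_plus. reflexivity. }
  rewrite HT', Hg'.
  pose proof (exp_pos (-T)) as HeT.
  split.
  - intros He1 x Hx. destruct (HQ x Hx) as [[Hs1 Hs2] ->].
    set (s := T + alpha * ln x) in *.
    assert (Hd : forall t, 0 <= dphi eta t).
    { intros t. rewrite dphi_sign. apply Rmult_le_pos. left; apply exp_pos.
      pose proof (exp_pos (-(eta*t))). lra. }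
    split; apply cmp_inv; auto; try (apply phi_pos; lra); apply mono_le; auto; lra.
  - intros He1 x Hx. destruct (HQ x Hx) as [[Hs1 Hs2] ->].
    set (s := T + alpha * ln x) in *.
    set (s0 := - ln (1 - eta) / eta).
    assert (Hln : ln (1 - eta) < 0). { rewrite <- ln_1. apply ln_increasing; lra. }
    assert (Hs0 : 0 < s0). { unfold s0. apply Rdiv_lt_0_compat; lra. }
    assert (Hdp : forall t, t <= s0 -> 0 <= dphi eta t).
    { intros t Ht. rewrite dphi_sign. apply Rmult_le_pos. left; apply exp_pos.
      assert (exp (ln (1-eta)) <= exp (-(eta*t))).
      { apply expmono. unfold s0 in Ht.
        apply (Rmult_le_compat_l eta) in Ht; [|lra].
        replace (eta * (- ln (1 - eta) / eta)) with (- ln (1-eta)) in Ht by (field; lra). lra. }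
      rewrite exp_ln in H; lra. }
    assert (Hdn : forall t, s0 <= t -> dphi eta t <= 0).
    { intros t Ht. rewrite dphi_sign. 
      assert (exp (-(eta*t)) <= exp (ln (1-eta))).
      { apply expmono. unfold s0 in Ht.
        apply (Rmult_le_compat_l eta) in Ht; [|lra].
        replace (eta * (- ln (1 - eta) / eta)) with (- ln (1-eta)) in Ht by (field; lra). lra. }
      rewrite exp_ln in H; [|lra]. pose proof (exp_pos (-(1-eta)*t)). nra. }
    assert (Hps : 0 < phi eta s) by (apply phi_pos; lra).
    split.
    +
      set (r := Rpower (1 - eta) (1 / eta)).
      assert (Hr : 0 < r) by (unfold r, Rpower; apply exp_pos).
      assert (Hphi0 : phi eta s0 = r * eta / (1 - eta)).
      { unfold phi, r, Rpower, s0.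
        replace (-(1-eta) * (- ln (1 - eta) / eta)) with (1/eta * ln (1-eta) + - ln (1-eta)) by (field; lra).
        replace (- (- ln (1 - eta) / eta)) with (1/eta * ln (1-eta)) by (field; lra).
        rewrite exp_plus, exp_Ropp, exp_ln; [|lra]. field. lra. }
      assert (HR : Rpower (1 - eta) (1 - 1 / eta) = (1 - eta) / r).
      { unfold r. unfold Rminus at 2. rewrite Rpower_plus.
        rewrite Rpower_Ropp, Rpower_1; [reflexivity|lra]. }
      assert (Hle : phi eta s <= phi eta s0).
      { destruct (Rle_dec s s0).
        - apply mono_le; auto. intros; apply Hdp; lra.
        - apply mono_ge; [lra|]. intros; apply Hdn; lra. }
      replace (Rpower (1 - eta) (1 - 1 / eta) * exp (- T) / eta) with (exp (-T) / phi eta s0).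
      2:{ rewrite Hphi0, HR. field. lra. }
      apply cmp_inv; auto.
    + destruct (Rle_dec s s0).
      * eapply Rle_trans; [|apply Rmax_r]. apply cmp_inv; auto. apply phi_pos; lra.
        apply mono_le; [lra|]. intros; apply Hdp; lra.
      * eapply Rle_trans; [|apply Rmax_l]. apply cmp_inv; auto. apply phi_pos; lra.
        apply mono_ge; [lra|]. intros; apply Hdn; lra.
Qed.
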